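(* Let $k\ge1$ and $c\in\mathcal{S}_k^\alpha\setminus\{\mathbf{0}\}$. Then $w_H(c)=q^{sk}-q^{\nu(c)+s(k-1)}$.
   Context: Let $R$ be a finite commutative chain ring with maximal ideal $\langle\gamma\rangle$, nilpotency index $s$ and residue field $R/\langle\gamma\rangle\cong\mathbb{F}_q$. Fix coset representatives $T=\{e_0,\dots,e_{q-1}\}$ with $e_0=0,e_1=1$, ordered $e_0<\dots<e_{q-1}$; each $r\in R$ is uniquely $\sum_{i=0}^{s-1}r_i\gamma^i$, $r_i\in T$; order $R$ by $x>y$ iff $x_i>y_i$ in $T$ for the largest $i$ with $x_i\neq y_i$; list $R=\{\rho_0,\dots,\rho_{q^s-1}\}$ increasingly. $\mathbf{a}^{(m)}$ is the constant vector of length $m$. Define $G_1^\alpha=(\rho_0\ \cdots\ \rho_{q^s-1})$ and, for $k>1$, $G_k^\alpha$ as the $k\times q^{sk}$ matrix of $q^s$ column blocks, the $j$-th having first row $\boldsymbol{\rho_j}^{(q^{s(k-1)})}$ and $G_{k-1}^\alpha$ below. $\mathcal{S}_k^\alpha$ is the $R$-submodule of $R^{q^{sk}}$ generated by the rows of $G_k^\alpha$. $w_H$ is the Hamming weight (number of nonzero coordinates). Valuation: for $x\in R\setminus\{0\}$, $\nu(x)$ is the largest $m$ with $x=\gamma^m\beta$, $\beta$ a unit; $\nu(0)=\infty$; for $x\in R^n$, $\nu(x)=\min_i\nu(x_i)$. *)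

(* Defs.v *)
From HB Require Import structures.
From mathcomp Require Import all_boot all_order all_algebra.
Set Implicit Arguments. Unset Strict Implicit. Unset Printing Implicit Defensive.
Import Order.TTheory GRing.Theory Num.Theory.
Local Open Scope ring_scope.

Section ChainCode.
Variable R : finComUnitRingType.
Variable gamma : R.
Variable s : nat.
Variable T : seq R.   (* coset representatives e_0 < e_1 < ... < e_{q-1} (order = list order) *)

(* q = |R / <gamma>| *)
Definition qT : nat := size T.

(* Finite commutative chain ring with maximal ideal <gamma>, nilpotency index s:
   the non-units are exactly the multiples of gamma (R is local with maximal
   ideal <gamma>), gamma^s = 0 and gamma^(s-1) <> 0. *)
Definition chain_ring_data : Prop :=
  [/\ forall x : R, x \notin GRing.unit <-> exists y, x = gamma * y,
      gamma ^+ s = 0 & gamma ^+ s.-1 != 0].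

Definition coset_reps : Prop :=
  [/\ forall x : R, exists! i : 'I_qT, exists y, x - T`_i = gamma * y,
      T`_0 = 0 & T`_1 = 1].

(* rho_j : the j-th element of R in the increasing order described in the
   paper: the order is lexicographic on the gamma-adic digits read from the
   most significant one, digits compared by their index in T; hence
   rho_j = sum_i e_{d_i(j)} gamma^i where d_i(j) is the i-th base-q digit of j. *)
Definition rho (j : nat) : R :=
  \sum_(i < s) T`_((j %/ qT ^ i) %% qT) * gamma ^+ i.

(* Entry (i, m) of the generator matrix G_k^alpha (rows/cols indexed from 0):
   G_1 = (rho_0 ... rho_{q^s-1}); G_{k+1} has q^s column blocks of width
   q^{sk}, block j has first row rho_j and G_k below. *)
Fixpoint Gentry (k i m : nat) : R :=
  match k with
  | 0 => 0
  | k'.+1 => if i is i'.+1 then Gentry k' i' (m %% qT ^ (s * k'))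
             else rho (m %/ qT ^ (s * k'))
  end.

Definition Gmx (k : nat) : 'M[R]_(k, qT ^ (s * k)) :=
  \matrix_(i < k, m < qT ^ (s * k)) Gentry k i m.

Definition in_Sk (k : nat) (c : 'rV[R]_(qT ^ (s * k))) : Prop :=
  exists a : 'rV[R]_k, c = a *m Gmx k.

End ChainCode.

Definition wH (R : finComUnitRingType) (n : nat) (c : 'rV[R]_n) : nat :=
  #|[set m : 'I_n | c 0 m != 0]|.

(* valuation of a nonzero x: the largest m with x = gamma^m * beta, beta a unit
   (for x <> 0 such m is < s since gamma^s = 0). *)
Definition nu_elt (R : finComUnitRingType) (gamma : R) (s : nat) (x : R) : nat :=
  \max_(m < s | [exists b : R, (b \is a GRing.unit) && (x == gamma ^+ m * b)]) m.

(* valuation of a vector: minimum over its nonzero coordinates (the value s,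
   standing for infinity, is only reached for the zero vector). *)
Definition nu_vec (R : finComUnitRingType) (gamma : R) (s n : nat)
  (c : 'rV[R]_n) : nat :=
  \big[minn/s]_(m < n | c 0 m != 0) nu_elt gamma s (c 0 m).

Arguments qT {R} T.
Arguments chain_ring_data {R} gamma s.
Arguments coset_reps {R} gamma T.
Arguments rho {R} gamma s T j.
Arguments Gentry {R} gamma s T k i m.
Arguments Gmx {R} gamma s T k.
Arguments in_Sk {R} gamma s T k c.
Arguments wH {R n} c.
Arguments nu_elt {R} gamma s x.
Arguments nu_vec {R} gamma s {n} c.

(* Main.v *)
Require Import Defs.
From mathcomp Require Import all_boot all_order all_algebra zify.
Set Implicit Arguments. Unset Strict Implicit. Unset Printing Implicit Defensive.
Import Order.TTheory GRing.Theory Num.Theory.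
Local Open Scope ring_scope.

Lemma card_fam (aT rT : finType) (F : aT -> pred rT) :
  #|[set f : {ffun aT -> rT} | [forall x, f x \in F x]]| = (\prod_(x : aT) #|F x|)%N.
Proof.
have -> : #|[set f : {ffun aT -> rT} | [forall x, f x \in F x]]| = #|(family F : simpl_pred {ffun aT -> rT})|.
  apply: eq_card => f; rewrite inE; apply/forallP/familyP => h x; exact: h.
rewrite card_family foldrE big_map /image_mem; by rewrite big_enum.
Qed.

Lemma bigmin_le (I : finType) (P : pred I) (F : I -> nat) x0 i : P i ->
  (\big[minn/x0]_(j | P j) F j <= F i)%N.
Proof.
move=> Pi; rewrite -big_filter.
have : i \in [seq j <- index_enum I | P j] by rewrite mem_filter Pi mem_index_enum.
elim: [seq j <- index_enum I | P j] => //= y l IH; rewrite inE big_cons => /orP [/eqP->|/IH h].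
  exact: geq_minl.
exact: leq_trans (geq_minr _ _) h.
Qed.

Section Aux.
Variable R : finComUnitRingType.
Variable gamma : R.
Variable s : nat.
Variable T : seq R.
Hypothesis HC : chain_ring_data gamma s.
Hypothesis HT : coset_reps gamma T.

Local Notation q := (qT T).

Lemma nonunitP x : x \notin GRing.unit <-> exists y, x = gamma * y.
Proof. by case: HC. Qed.

Lemma s_gt0 : (0 < s)%N.
Proof.
case: HC => _ h1 _; case: s h1 => // /eqP; rewrite expr0 oner_eq0 //.
Qed.

Lemma gpow_eq0 n : (s <= n)%N -> gamma ^+ n = 0.
Proof.
case: HC => _ h _ /subnK <-; by rewrite exprD h mulr0.
Qed.

Lemma gpow_neq0 n : (n < s)%N -> gamma ^+ n != 0.
Proof.
case: HC => _ _ h lt; apply: contraNneq h => e.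
have -> : s.-1 = (s.-1 - n + n)%N by rewrite subnK //; lia.
by rewrite exprD e mulr0.
Qed.

Lemma unit_addg u y : u \is a GRing.unit -> u + gamma * y \is a GRing.unit.
Proof.
move=> Hu; apply/negPn/negP => /nonunitP [z hz].
have : u \notin GRing.unit by apply/nonunitP; exists (z - y); rewrite mulrBr -hz addrK.
by rewrite Hu.
Qed.

Lemma unit_mul_eq0 (x u : R) : u \is a GRing.unit -> x * u = 0 -> x = 0.
Proof. by move=> Hu h; rewrite -(mulrK Hu x) h mul0r. Qed.

Lemma T_diff i j : (i < q)%N -> (j < q)%N -> (exists y : R, T`_i - T`_j = gamma * y) -> i = j.
Proof.
move=> hi hj [y hy]; case: HT => H _ _.
have [i1 [_ hu]] := H T`_i.
have e1 := hu (Ordinal hj) (ex_intro _ y hy).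
have e2 : i1 = Ordinal hi by apply: hu; exists 0; rewrite /= subrr mulr0.
by move: (congr1 val (etrans (esym e2) e1)).
Qed.

Lemma T_diff_unit i j : (i < q)%N -> (j < q)%N -> i <> j -> T`_i - T`_j \is a GRing.unit.
Proof.
move=> hi hj ne; apply/negPn/negP => /nonunitP h; exact: ne (T_diff hi hj h).
Qed.

Lemma T0 : T`_0 = 0. Proof. by case: HT. Qed.

Lemma q_gt1 : (1 < q)%N.
Proof.
case: HT => _ _ h1; rewrite /qT; case: T h1 => [|a [|b l]] //= /eqP; rewrite eq_sym oner_eq0 //.
Qed.

Lemma T_unit_or0 i : (i < q)%N -> T`_i = 0 \/ T`_i \is a GRing.unit.
Proof.
move=> hi; case: i hi => [|i] hi; first by left; exact: T0.
right; have := T_diff_unit hi (ltn_trans (isT : 0 < 1)%N q_gt1) (ltac:(by []) : i.+1 <> 0%N).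
by rewrite T0 subr0.
Qed.


Lemma digits0 N : forall (t : nat -> R), (forall i, t i = 0 \/ t i \is a GRing.unit) ->
  forall r, gamma ^+ r * (\sum_(i < N) t i * gamma ^+ i) = 0 ->
  forall i, (i < N)%N -> (i + r < s)%N -> t i = 0.
Proof.
elim: N => [|N IH] t ht r H i //.
rewrite big_ord_recl /= expr0 mulr1 in H.
set S := \sum_(j < N) t j.+1 * gamma ^+ j.
have e : \sum_(j < N) t (bump 0 j) * gamma ^+ (bump 0 j) = gamma * S.
  rewrite /S mulr_sumr; apply: eq_bigr => j _.
  by rewrite /bump /= add1n exprS mulrCA.
rewrite e in H.
have t0 : (r < s)%N -> t 0%N = 0.
  move=> rs; case: (ht 0%N) => // hu; exfalso.
  have : gamma ^+ r = 0 by apply: (unit_mul_eq0 (unit_addg S hu)).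
  by move/eqP; rewrite (negPf (gpow_neq0 rs)).
case: i => [|i] hi hir; first by apply: t0; lia.
have rs : (r < s)%N by lia.
apply: (IH (fun j => t j.+1) (fun j => ht j.+1) r.+1).
all: try lia.
by rewrite exprSr -mulrA -/S -[RHS]H (t0 rs) add0r.
Qed.


Lemma val_exists (x : R) : x != 0 ->
  exists m u, [/\ (m < s)%N, u \is a GRing.unit & x = gamma ^+ m * u].
Proof.
move=> hx.
have claim : forall n, (exists m u, [/\ (m < n)%N, u \is a GRing.unit & x = gamma ^+ m * u])
   \/ exists y, x = gamma ^+ n * y.
  elim => [|n [[m [u [h1 h2 h3]]]|[y hy]]].
  - by right; exists x; rewrite expr0 mul1r.
  - by left; exists m, u; split => //; lia.
  - case: (boolP (y \is a GRing.unit)) => hu; first by left; exists n, y.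
    right; have [z hz] := (nonunitP y).1 hu; exists z.
    by rewrite hy hz exprSr mulrA.
case: (claim s) => [[m [u [h1 h2 h3]]]|[y hy]]; first by exists m, u.
by move: hx; rewrite hy gpow_eq0 // mul0r eqxx.
Qed.

Lemma val_unique m n (u w : R) : (m < s)%N -> (n < s)%N ->
  u \is a GRing.unit -> w \is a GRing.unit -> gamma ^+ m * u = gamma ^+ n * w -> m = n.
Proof.
wlog le : m n u w / (m <= n)%N.
  move=> W hm hn hu hw e; case: (leqP m n) => h.
    exact: (W m n u w h hm hn hu hw e).
  by symmetry; apply: (W n m w u) => //; apply: ltnW.
move=> hm hn hu hw e; move: le; rewrite leq_eqVlt => /orP [/eqP //|lt].
exfalso.
have ex : gamma ^+ n * w = gamma ^+ m * (gamma * (gamma ^+ (n - m.+1) * w)).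
  by rewrite mulrA mulrA -exprSr -exprD; congr (gamma ^+ _ * _); lia.
have : gamma ^+ m * (u + gamma * - (gamma ^+ (n - m.+1) * w)) = 0.
  by rewrite mulrN mulrDr mulrN e ex subrr.
move/(unit_mul_eq0 (unit_addg _ hu))/eqP; by rewrite (negPf (gpow_neq0 hm)).
Qed.

Lemma nuE (x : R) m u : (m < s)%N -> u \is a GRing.unit -> x = gamma ^+ m * u ->
  nu_elt gamma s x = m.
Proof.
move=> hm hu hx; apply/eqP; rewrite eqn_leq; apply/andP; split.
- apply/bigmax_leqP => i /existsP [b /andP [hb /eqP hb']].
  by rewrite (val_unique (ltn_ord i) hm hb hu) // -hb'.
- have := @leq_bigmax_cond _ (fun i : 'I_s => [exists b, (b \is a GRing.unit) && (x == gamma ^+ i * b)])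
     (fun i => nat_of_ord i) (Ordinal hm).
  apply; apply/existsP; exists u; by rewrite hu hx eqxx.
Qed.


Definition rhon n j := \sum_(i < n) T`_((j %/ q ^ i) %% q) * gamma ^+ i.

Lemma digit_shift (b j d n i : nat) : (0 < b)%N -> (i < n)%N ->
  (((j + d * b ^ n) %/ b ^ i) %% b = (j %/ b ^ i) %% b)%N.
Proof.
move=> hb hi.
have -> : (d * b ^ n = (d * b ^ (n - i.+1)) * b * b ^ i)%N.
  by rewrite -!mulnA -!expnS -expnD; congr (_ * b ^ _)%N; lia.
by rewrite addnC divnMDl ?expn_gt0 ?hb // modnMDl.
Qed.

Lemma digit_top (b j d n : nat) : (0 < b)%N -> (j < b ^ n)%N -> (d < b)%N ->
  (((j + d * b ^ n) %/ b ^ n) %% b = d)%N.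
Proof.
move=> hb hj hd.
by rewrite addnC divnMDl ?expn_gt0 ?hb // divn_small // addn0 modn_small.
Qed.

Lemma rhon_ex n (x : R) : exists j, (j < q ^ n)%N /\ exists y, x - rhon n j = gamma ^+ n * y.
Proof.
have q0 : (0 < q)%N by have := q_gt1; lia.
elim: n => [|n [j [hj [y hy]]]].
  exists 0%N; split; first by rewrite expn0.
  by exists x; rewrite /rhon big_ord0 subr0 expr0 mul1r.
case: HT => H _ _; have [[d hd] [[z hz] _]] := H y.
exists (j + d * q ^ n)%N; split.
  rewrite expnS; nia.
exists z; rewrite /rhon big_ord_recr /=.
have -> : \sum_(i < n) T`_(((j + d * q ^ n) %/ q ^ i) %% q) * gamma ^+ i = rhon n j.
  by apply: eq_bigr => i _; rewrite digit_shift.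
rewrite digit_top // opprD addrA hy exprSr -mulrA -hz mulrBr.
by congr (_ - _); apply: mulrC.
Qed.

Lemma rho_surj (x : R) : exists j, (j < q ^ s)%N /\ rho gamma s T j = x.
Proof.
have [j [hj [y hy]]] := rhon_ex s x; exists j; split => //.
by apply/eqP; rewrite eq_sym -subr_eq0; apply/eqP; rewrite [rho _ _ _ _]/= hy gpow_eq0 // mul0r.
Qed.


Definition E (d : {ffun 'I_s -> 'I_q}) : R := \sum_(i < s) T`_(d i) * gamma ^+ i.

Lemma tfun_ok (d e : {ffun 'I_s -> 'I_q}) (n : nat) :
  let t := if @insub _ (fun k => k < s)%N _ n is Some i then T`_(d i) - T`_(e i) else 0 in
  t = 0 \/ t \is a GRing.unit.
Proof.
case: insub => [i|]; last by left.
case: (eqVneq (d i) (e i)) => [->|ne]; first by left; rewrite subrr.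
right; apply: T_diff_unit => // h; by move: ne; rewrite (val_inj h) eqxx.
Qed.

Lemma E_inj : injective E.
Proof.
move=> d e h; apply/ffunP => i.
pose t n := if @insub _ (fun k => k < s)%N _ n is Some i then T`_(d i) - T`_(e i) else 0.
have ht : forall n, t n = 0 \/ t n \is a GRing.unit by move=> n; apply: tfun_ok.
have hs : gamma ^+ 0 * (\sum_(i < s) t i * gamma ^+ i) = 0.
  rewrite expr0 mul1r -[RHS](subrr (E d)) {2}h /E -sumrB.
  by apply: eq_bigr => k _; rewrite /t valK mulrBl.
have := digits0 ht hs (ltn_ord i); rewrite addn0 => /(_ (ltn_ord i)).
rewrite /t valK => /eqP; rewrite subr_eq0 => /eqP hT.
apply: val_inj; apply: (T_diff (ltn_ord (d i)) (ltn_ord (e i))); exists 0; by rewrite hT subrr mulr0.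
Qed.

Lemma card_R : #|R| = (q ^ s)%N.
Proof.
apply/eqP; rewrite eqn_leq; apply/andP; split.
  pose f := fun j : 'I_(q ^ s) => rho gamma s T j.
  have : (#|R| <= #|codom f|)%N.
    apply/subset_leq_card/subsetP => x _.
    have [j [hj e]] := rho_surj x; apply/codomP; exists (Ordinal hj); by rewrite /f e.
  move/leq_trans; apply; apply: leq_trans (card_size _) _.
  by rewrite size_codom card_ord.
have := @leq_card _ _ E E_inj; by rewrite card_ffun !card_ord.
Qed.


Lemma ann_char (d : {ffun 'I_s -> 'I_q}) v : (v <= s)%N ->
  (gamma ^+ v * E d == 0) = [forall i : 'I_s, (i < s - v)%N ==> (val (d i) == 0%N)].
Proof.
move=> hv; apply/eqP/forallP.
- move=> h i; apply/implyP => hi.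
  pose t n := if @insub _ (fun k => k < s)%N _ n is Some i then T`_(d i) else 0.
  have ht : forall n, t n = 0 \/ t n \is a GRing.unit.
    move=> n; rewrite /t; case: insub => [j|]; last by left.
    exact: T_unit_or0.
  have hs : gamma ^+ v * (\sum_(i < s) t i * gamma ^+ i) = 0.
    by rewrite -[RHS]h /E; congr (_ * _); apply: eq_bigr => k _; rewrite /t valK.
  have := digits0 ht hs (ltn_ord i) => /(_ ltac:(lia)).
  rewrite /t valK => hT; apply/eqP.
  have q0 : (0 < q)%N by have := q_gt1; lia.
  apply: (T_diff (ltn_ord (d i)) q0); exists 0; by rewrite hT T0 subrr mulr0.
- move=> h; rewrite /E mulr_sumr; apply: big1 => i _.
  case: (ltnP i (s - v)) => hi.
  + by move: (h i); rewrite hi /= => /eqP ->; rewrite T0 mul0r mulr0.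
  + by rewrite mulrCA -exprD gpow_eq0 ?mulr0 //; lia.
Qed.

Lemma E_bij : bijective E.
Proof. apply: (@inj_card_bij _ _ E E_inj); by rewrite card_R card_ffun !card_ord. Qed.

Lemma ann_count v : (v <= s)%N -> #|[set z : R | gamma ^+ v * z == 0]| = (q ^ v)%N.
Proof.
move=> hv.
rewrite -(on_card_preimset (onW_bij _ E_bij)).
have -> : #|E @^-1: [set z : R | gamma ^+ v * z == 0]| =
   #|[set d : {ffun 'I_s -> 'I_q} | [forall i, d i \in
       (if (i < s - v)%N then [pred x : 'I_q | val x == 0%N] else predT)]]|.
  apply: eq_card => d; rewrite !inE ann_char //.
  apply: eq_forallb => i; case: ifP => //= _.
rewrite card_fam.
have q0 : (0 < q)%N by have := q_gt1; lia.
have c1 : #|[pred x : 'I_q | val x == 0%N]| = 1%N.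
  rewrite -(card1 (Ordinal q0)); apply: eq_card => x; rewrite !inE; apply/eqP/eqP.
  - by [].
  - by [].
rewrite (eq_bigr (fun i : 'I_s => if (i < s - v)%N then 1%N else q)); last first.
  by move=> i _; case: ifP => _; rewrite ?c1 ?card_ord.
rewrite -(big_mkord xpredT (fun i => if (i < s - v)%N then 1%N else q)).
rewrite (big_cat_nat (n := s - v)) //=; last by lia.
rewrite (eq_big_nat _ _ (F2 := fun _ => 1%N)); last by move=> i /andP [_ ->].
rewrite [X in (_ * X)%N](eq_big_nat _ _ (F2 := fun _ => q)); last first.
  by move=> i /andP [h _]; rewrite ltnNge h.
rewrite !prod_nat_const_nat exp1n mul1n; congr (q ^ _)%N; lia.
Qed.


Lemma col_surj k : forall x : nat -> R, exists m, (m < q ^ (s * k))%N /\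
  forall i, (i < k)%N -> Gentry gamma s T k i m = x i.
Proof.
elim: k => [|k IH] x.
  by exists 0%N; split => //; rewrite muln0 expn0.
have [m' [hm' hx']] := IH (fun i => x i.+1).
have [j [hj ej]] := rho_surj (x 0%N).
have Q0 : (0 < q ^ (s * k))%N by rewrite expn_gt0; have := q_gt1; lia.
exists (j * q ^ (s * k) + m')%N; split.
  rewrite mulnS expnD; nia.
case => [|i] hi /=.
  by rewrite divnMDl // divn_small // addn0.
by rewrite modnMDl modn_small // hx'.
Qed.

Lemma main k (a : 'rV[R]_k) : (1 <= k)%N -> a *m Gmx gamma s T k != 0 ->
  wH (a *m Gmx gamma s T k) =
  (q ^ (s * k) - q ^ (nu_vec gamma s (a *m Gmx gamma s T k) + s * (k - 1)))%N.
Proof.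
move=> k1 cne.
set n := (q ^ (s * k))%N.
pose col (m : 'I_n) : {ffun 'I_k -> R} := [ffun i : 'I_k => Gentry gamma s T k i m].
have col_bij : bijective col.
  have surj : forall x : {ffun 'I_k -> R}, exists m : 'I_n, col m = x.
    move=> x; have [m [hm hx]] := col_surj k (fun i => if @insub _ (fun j => j < k)%N _ i is Some j then x j else 0).
    exists (Ordinal hm); apply/ffunP => i; by rewrite ffunE hx // valK.
  have [g hg] := fin_all_exists surj.
  have gbij : bijective g.
    apply: (@inj_card_bij _ _ g (can_inj hg)).
    by rewrite card_ord card_ffun card_R card_ord /n expnM.
  exact: (bij_can_bij gbij hg).
pose dot (x : {ffun 'I_k -> R}) := \sum_(i : 'I_k) a 0 i * x i.
have cE : forall m, (a *m Gmx gamma s T k) 0 m = dot (col m).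
  by move=> m; rewrite !mxE; apply: eq_bigr => i _; rewrite mxE ffunE.
have wHE : wH (a *m Gmx gamma s T k) = #|[set x : {ffun 'I_k -> R} | dot x != 0]|.
  rewrite /wH -(on_card_preimset (onW_bij _ col_bij)); apply: eq_card => m.
  by rewrite !inE cE.
have [i1 hi1] : exists i, a 0 i != 0.
  case: (pickP (fun i => a 0 i != 0)) => [i1 hi1|h]; first by exists i1.
  exfalso; move: cne; rewrite (_ : a = 0) ?mul0mx ?eqxx //.
  apply/matrixP => i j; rewrite ord1 !mxE; by move: (h j) => /negbFE/eqP.
have [i0 hi0 hmin] : exists2 i0, a 0 i0 != 0 &
    forall i, a 0 i != 0 -> (nu_elt gamma s (a 0%R i0) <= nu_elt gamma s (a 0%R i))%N.
  case: (@arg_minnP _ i1 (fun i => a 0 i != 0) (fun i => nu_elt gamma s (a 0 i)) hi1).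
  by move=> i0 h0 hm; exists i0.
set v := nu_elt gamma s (a 0 i0).
have [m0 [u0 [hm0 hu0 ha0]]] := val_exists hi0.
have vE : v = m0 by apply: nuE ha0.
have vs : (v < s)%N by rewrite vE.
have [b [hb hbu]] : exists b : 'I_k -> R, (forall i, a 0 i = gamma ^+ v * b i) /\ b i0 \is a GRing.unit.
  exists (fun i => if i == i0 then u0 else odflt 0 [pick y | a 0 i == gamma ^+ v * y]).
  split; last by rewrite eqxx.
  move=> i; case: eqP => [->|ne]; first by rewrite vE.
  case: pickP => [y /eqP //|h]; exfalso.
  case: (eqVneq (a 0 i) 0) => [z|nz].
    by move: (h 0); rewrite mulr0 z eqxx.
  have [m [u [hm hu ha]]] := val_exists nz.
  have := hmin i nz; rewrite (nuE hm hu ha) -/v => le.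
  by move: (h (gamma ^+ (m - v) * u)); rewrite mulrA -exprD subnKC // ha eqxx.
pose psi (x : {ffun 'I_k -> R}) : {ffun 'I_k -> R} :=
  [ffun i => if i == i0 then \sum_(j : 'I_k) b j * x j else x i].
have dotE : forall x, dot x = gamma ^+ v * psi x i0.
  move=> x; rewrite /dot ffunE eqxx mulr_sumr; apply: eq_bigr => j _.
  by rewrite hb mulrA.
have psi_inj : injective psi.
  move=> x y h; apply/ffunP => i.
  have hj : forall j, j != i0 -> x j = y j.
    by move=> j ne; move: (congr1 (fun f : {ffun 'I_k -> R} => f j) h); rewrite !ffunE (negPf ne).
  case: (eqVneq i i0) => [->|ne]; last exact: hj.
  move: (congr1 (fun f : {ffun 'I_k -> R} => f i0) h); rewrite !ffunE eqxx.
  rewrite (bigD1 i0) //= [X in _ = X](bigD1 i0) //=.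
  rewrite (eq_bigr (fun j => b j * y j)); last by move=> j /hj ->.
  by move/addIr/(mulrI hbu).
have zcount : #|[set x : {ffun 'I_k -> R} | dot x == 0]| = (q ^ v * (q ^ s) ^ (k - 1))%N.
  have -> : #|[set x : {ffun 'I_k -> R} | dot x == 0]| =
     #|psi @^-1: [set y : {ffun 'I_k -> R} | gamma ^+ v * y i0 == 0]|.
    by apply: eq_card => x; rewrite !inE dotE.
  rewrite card_preimset //.
  have -> : #|[set y : {ffun 'I_k -> R} | gamma ^+ v * y i0 == 0]| =
     #|[set y : {ffun 'I_k -> R} | [forall i, y i \in
        (if i == i0 then [pred z : R | gamma ^+ v * z == 0] else predT)]]|.
    apply: eq_card => y; rewrite !inE; apply/idP/forallP.
    - by move=> h i; case: eqP => [->|] //.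
    - by move=> /(_ i0); rewrite eqxx.
  rewrite card_fam (bigD1 i0) //= eqxx.
  have -> : #|[pred z : R | gamma ^+ v * z == 0]| = (q ^ v)%N.
    rewrite -(ann_count (ltnW vs)); apply: eq_card => z; by rewrite !inE.
  congr (_ * _)%N.
  rewrite (eq_bigr (fun _ => #|R|)); last by move=> i /negPf ->.
  rewrite prod_nat_const card_R; congr (_ ^ _)%N.
  by rewrite cardC1 card_ord; lia.
have nzE : #|[set x : {ffun 'I_k -> R} | dot x != 0]| = ((q ^ s) ^ k - q ^ v * (q ^ s) ^ (k - 1))%N.
  have := cardsC [set x : {ffun 'I_k -> R} | dot x == 0].
  rewrite card_ffun card_R card_ord => hC.
  rewrite -zcount -hC addKn.
  by apply: eq_card => x; rewrite !inE.
have nvE : nu_vec gamma s (a *m Gmx gamma s T k) = v.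
  case: col_bij => h colK hK.
  pose e : {ffun 'I_k -> R} := [ffun i => (i == i0)%:R].
  have de : dot e = a 0 i0.
    rewrite /dot (bigD1 i0) //= ffunE eqxx mulr1 big1 ?addr0 //.
    by move=> i /negPf ne; rewrite ffunE ne mulr0.
  have c0 : (a *m Gmx gamma s T k) 0 (h e) = a 0 i0 by rewrite cE hK de.
  apply/eqP; rewrite eqn_leq; apply/andP; split.
    have hb0 := @bigmin_le _ (fun m : 'I_n => (a *m Gmx gamma s T k) 0 m != 0)
      (fun m => nu_elt gamma s ((a *m Gmx gamma s T k) 0 m)) s (h e).
    rewrite /= c0 in hb0; exact: hb0.
  rewrite /nu_vec; apply: (big_ind (fun x => v <= x)%N).
  - exact: ltnW.
  - by move=> x y hx hy; rewrite leq_min hx hy.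
  move=> m hm; move: hm; rewrite cE dotE => hm.
  have ynz : psi (col m) i0 != 0 by apply: contraNneq hm => ->; rewrite mulr0.
  have [j [u [hj hu hy]]] := val_exists ynz.
  have hvj : (v + j < s)%N.
    rewrite ltnNge; apply/negP => le; move: hm; rewrite hy mulrA -exprD gpow_eq0 // mul0r eqxx //.
  by rewrite hy mulrA -exprD (nuE hvj hu (erefl _)) leq_addr.
rewrite wHE nzE nvE -!expnM expnD.
by [].
Qed.

End Aux.

Theorem corollary3p10 (R : finComUnitRingType) (gamma : R) (s : nat) (T : seq R)
  (k : nat) (c : 'rV[R]_(qT T ^ (s * k))) :
  chain_ring_data gamma s -> coset_reps gamma T -> (1 <= k)%N ->
  in_Sk gamma s T k c -> c != 0 ->
  wH c = (qT T ^ (s * k) - qT T ^ (nu_vec gamma s c + s * (k - 1)))%N.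
Proof.
move=> HC HT k1 [a ->] cne.
exact: main.
Qed.
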